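(* Let $(\bar x,\bar r)\in\mathbb{R}^n\times\mathbb{R}^2_+$ with $\bar r=\mathbb{Q}(\bar x)$ be a local optimal solution of problem (P2), and suppose $(\bar x,\bar\xi)\in\mathcal{M}(\bar r)$. Then $(\bar x,\bar\lambda)$ with $\bar\lambda:=\bar\xi$ is a local optimal solution of problem (P1).
   Context: Fix $\Psi\in\mathbb{R}^{d\times n}$, linear difference operators $D_1,\dots,D_n$ (matrices with $n$ columns), and $\|x\|_{\mathrm{TV}}:=\sum_{i=1}^n\|D_ix\|_1$. Training data $\Phi_{\mathrm{tr}}\in\mathbb{R}^{m_1\times n}$, $b_{\mathrm{tr}}\in\mathbb{R}^{m_1}$ and validation data $\Phi_{\mathrm{val}}\in\mathbb{R}^{m_2\times n}$, $b_{\mathrm{val}}\in\mathbb{R}^{m_2}$ are given. Let $F(x):=\frac12\|\Phi_{\mathrm{val}}x-b_{\mathrm{val}}\|_2^2$. For $\lambda\in\mathbb{R}^2_+$, $\mathbb{S}_p(\lambda)$ is the set of minimizers over $x\in\mathbb{R}^n$ of $\frac12\|\Phi_{\mathrm{tr}}x-b_{\mathrm{tr}}\|_2^2+\lambda_1\|\Psi x\|_1+\lambda_2\|x\|_{\mathrm{TV}}$; for $r\in\mathbb{R}^2_+$, $\mathbb{S}_c(r)$ is the set of minimizers over $x\in\mathbb{R}^n$ of $\frac12\|\Phi_{\mathrm{tr}}x-b_{\mathrm{tr}}\|_2^2$ subject to $\|\Psi x\|_1\le r_1$, $\|x\|_{\mathrm{TV}}\le r_2$. Problem (P1): minimize $F(x)$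 over $(x,\lambda)\in\mathbb{R}^n\times\mathbb{R}^2_+$ subject to $x\in\mathbb{S}_p(\lambda)$. Problem (P2): minimize $F(x)$ over $(x,r)\in\mathbb{R}^n\times\mathbb{R}^2_+$ subject to $x\in\mathbb{S}_c(r)$. A feasible point $(\bar x,\bar y)$ of either problem is a local optimal solution if there is $\varepsilon>0$ such that $F(\bar x)\le F(x)$ for every feasible $(x,y)$ with $\|(x,y)-(\bar x,\bar y)\|<\varepsilon$. $\mathbb{Q}(x):=(\|\Psi x\|_1,\|x\|_{\mathrm{TV}})\in\mathbb{R}^2_+$. For $r\in\mathbb{R}^2_+$, $\mathcal{M}(r):=\{(x,\xi)\in\mathbb{R}^n\times\mathbb{R}^2_+ : 0\in\Phi_{\mathrm{tr}}^\top(\Phi_{\mathrm{tr}}x-b_{\mathrm{tr}})+\xi_1\Psi^\top\partial\|\cdot\|_1(\Psi x)+\xi_2\sum_{i=1}^n D_i^\top\partial\|\cdot\|_1(D_ix),\ \xi_1(\|\Psi x\|_1-r_1)=0,\ \xi_2(\|x\|_{\mathrm{TV}}-r_2)=0\}$, where $\partial$ is the convex subdifferential. *)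

(* Defs.v *)
From mathcomp Require Import all_boot all_order all_algebra.
From mathcomp Require Import reals.
Set Implicit Arguments. Unset Strict Implicit. Unset Printing Implicit Defensive.
Import Order.TTheory GRing.Theory Num.Theory.
Local Open Scope ring_scope.

Section Bilevel.
Variable R : realType.

Definition norm1 {k : nat} (v : 'cV[R]_k) : R := \sum_(i < k) `|v i 0|.
Definition sqnorm2 {k : nat} (v : 'cV[R]_k) : R := \sum_(i < k) (v i 0) ^+ 2.
Definition inner {k : nat} (u v : 'cV[R]_k) : R := \sum_(i < k) u i 0 * v i 0.

Definition subdiff {k : nat} (f : 'cV[R]_k -> R) (z : 'cV[R]_k) : 'cV[R]_k -> Prop :=
  fun v => forall w, f z + inner v (w - z) <= f w.

Variables (n d m1 m2 : nat) (p : 'I_n -> nat).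
Variables (Psi : 'M[R]_(d, n)) (D : forall i : 'I_n, 'M[R]_(p i, n)).
Variables (Phitr : 'M[R]_(m1, n)) (btr : 'cV[R]_m1).
Variables (Phival : 'M[R]_(m2, n)) (bval : 'cV[R]_m2).

Definition TV (x : 'cV[R]_n) : R := \sum_(i < n) norm1 (D i *m x).

Definition Fval (x : 'cV[R]_n) : R := 2^-1 * sqnorm2 (Phival *m x - bval).
Definition Ltr (x : 'cV[R]_n) : R := 2^-1 * sqnorm2 (Phitr *m x - btr).

Definition nonneg2 (y : R * R) : Prop := 0 <= y.1 /\ 0 <= y.2.

Definition Sp (lam : R * R) (x : 'cV[R]_n) : Prop :=
  forall z : 'cV[R]_n,
    Ltr x + lam.1 * norm1 (Psi *m x) + lam.2 * TV x
    <= Ltr z + lam.1 * norm1 (Psi *m z) + lam.2 * TV z.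

Definition Sc (r : R * R) (x : 'cV[R]_n) : Prop :=
  [/\ norm1 (Psi *m x) <= r.1, TV x <= r.2 &
      forall z : 'cV[R]_n, norm1 (Psi *m z) <= r.1 -> TV z <= r.2 -> Ltr x <= Ltr z].

Definition feasP1 (x : 'cV[R]_n) (lam : R * R) : Prop := nonneg2 lam /\ Sp lam x.
Definition feasP2 (x : 'cV[R]_n) (r : R * R) : Prop := nonneg2 r /\ Sc r x.

Definition dist (x : 'cV[R]_n) (y : R * R) (x' : 'cV[R]_n) (y' : R * R) : R :=
  Num.sqrt (sqnorm2 (x - x') + (y.1 - y'.1) ^+ 2 + (y.2 - y'.2) ^+ 2).

Definition local_opt (feas : 'cV[R]_n -> R * R -> Prop) (xb : 'cV[R]_n) (yb : R * R) : Prop :=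
  feas xb yb /\
  exists2 eps : R, 0 < eps &
    forall x y, feas x y -> dist x y xb yb < eps -> Fval xb <= Fval x.

Definition localP1 := local_opt feasP1.
Definition localP2 := local_opt feasP2.

Definition Qmap (x : 'cV[R]_n) : R * R := (norm1 (Psi *m x), TV x).

Definition Mset (r : R * R) (x : 'cV[R]_n) (xi : R * R) : Prop :=
  [/\ nonneg2 xi,
      exists (v : 'cV[R]_d) (w : forall i : 'I_n, 'cV[R]_(p i)),
        [/\ subdiff norm1 (Psi *m x) v,
            forall i, subdiff norm1 (D i *m x) (w i) &
            Phitr^T *m (Phitr *m x - btr) + xi.1 *: (Psi^T *m v)
              + xi.2 *: (\sum_(i < n) (D i)^T *m w i) = 0],
      xi.1 * (norm1 (Psi *m x) - r.1) = 0 &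
      xi.2 * (TV x - r.2) = 0].

End Bilevel.

(* Main.v *)
Require Import Defs.
From mathcomp Require Import all_boot all_order all_algebra.
From mathcomp Require Import reals.
From mathcomp Require Import lra.
Import Order.TTheory GRing.Theory Num.Theory.
Set Implicit Arguments. Unset Strict Implicit.
Local Open Scope ring_scope.

Section Aux.
Variable R : realType.

Lemma innerE k (u v : 'cV[R]_k) : inner u v = (u^T *m v) 0 0.
Proof. by rewrite /inner mxE; apply: eq_bigr => i _; rewrite mxE. Qed.

Lemma inner_tr k l (A : 'M[R]_(k, l)) u h : inner u (A *m h) = inner (A^T *m u) h.
Proof. by rewrite !innerE trmx_mul trmxK mulmxA. Qed.

Lemma innerDl k (u v h : 'cV[R]_k) : inner (u + v) h = inner u h + inner v h.
Proof. rewrite /inner -big_split; apply: eq_bigr => i _; by rewrite mxE mulrDl. Qed.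

Lemma innerZl k a (u h : 'cV[R]_k) : inner (a *: u) h = a * inner u h.
Proof. rewrite /inner mulr_sumr; apply: eq_bigr => i _; by rewrite mxE mulrA. Qed.

Lemma inner0l k (h : 'cV[R]_k) : inner 0 h = 0.
Proof. rewrite /inner big1 // => i _; by rewrite mxE mul0r. Qed.

Lemma inner_suml k (I : finType) (f : I -> 'cV[R]_k) h :
  inner (\sum_i f i) h = \sum_i inner (f i) h.
Proof.
rewrite /inner exchange_big /=; apply: eq_bigr => j _.
by rewrite summxE mulr_suml.
Qed.

Lemma sqnorm2_ge0 k (v : 'cV[R]_k) : 0 <= sqnorm2 v.
Proof. by apply: sumr_ge0 => i _; rewrite sqr_ge0. Qed.

Lemma sqnorm2D k (a b : 'cV[R]_k) :
  sqnorm2 (a + b) = sqnorm2 a + 2 * inner a b + sqnorm2 b.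
Proof.
rewrite /sqnorm2 /inner mulr_sumr -!big_split /=; apply: eq_bigr => i _.
rewrite mxE sqrrD; congr (_ + _ + _); by rewrite mulr_natl.
Qed.

Lemma norm1_ge0 k (v : 'cV[R]_k) : 0 <= norm1 v.
Proof. by apply: sumr_ge0 => i _. Qed.

Lemma entry_le k (y : 'cV[R]_k) j : `|y j 0| <= Num.sqrt (sqnorm2 y).
Proof.
rewrite -sqrtr_sqr ler_sqrt ?sqnorm2_ge0 // /sqnorm2 (bigD1 j) //= lerDl.
by apply: sumr_ge0 => i _; rewrite sqr_ge0.
Qed.

Definition Kmx k l (A : 'M[R]_(k, l)) : R := \sum_i \sum_j `|A i j|.
Arguments Kmx {k l} A.

Lemma Kmx_ge0 k l (A : 'M[R]_(k, l)) : 0 <= Kmx A.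
Proof. by apply: sumr_ge0 => i _; apply: sumr_ge0. Qed.

Lemma norm1_mul_le k l (A : 'M[R]_(k, l)) y :
  norm1 (A *m y) <= Kmx A * Num.sqrt (sqnorm2 y).
Proof.
rewrite /norm1 /Kmx mulr_suml; apply: ler_sum => i _.
rewrite mxE mulr_suml; apply: (le_trans (ler_norm_sum _ _ _)); apply: ler_sum => j _.
by rewrite normrM ler_wpM2l // entry_le.
Qed.

Lemma norm1_lip k l (A : 'M[R]_(k, l)) x y :
  `|norm1 (A *m x) - norm1 (A *m y)| <= Kmx A * Num.sqrt (sqnorm2 (x - y)).
Proof.
apply: le_trans; last exact: (norm1_mul_le A (x - y)).
rewrite /norm1 -sumrB; apply: (le_trans (ler_norm_sum _ _ _)); apply: ler_sum => i _.
rewrite mulmxBr !mxE; exact: ler_dist_dist.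
Qed.


Variables (n d m1 m2 : nat) (p : 'I_n -> nat).
Variables (Psi : 'M[R]_(d, n)) (D : forall i : 'I_n, 'M[R]_(p i, n)).
Variables (Phitr : 'M[R]_(m1, n)) (btr : 'cV[R]_m1).

Lemma Sp_of_M rb xb xi : Mset Psi D Phitr btr rb xb xi -> Sp Psi D Phitr btr xi xb.
Proof.
case=> [[xi1 xi2] [v [w [sv sw eq0]]] _ _] z.
set h := z - xb.
set a := Phitr *m xb - btr.
have eL : Ltr Phitr btr z = Ltr Phitr btr xb + inner (Phitr^T *m a) h + 2^-1 * sqnorm2 (Phitr *m h).
  rewrite {1}/Ltr.
  have -> : Phitr *m z - btr = a + Phitr *m h by rewrite /a /h mulmxBr; apply/matrixP=> i j; rewrite !mxE; lra.
  rewrite sqnorm2D -inner_tr -/a; set u := inner _ _.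
  have : (2:R) != 0 by rewrite pnatr_eq0.
  move=> h2; rewrite !mulrDr mulrA mulVf // mul1r //.
have hL : Ltr Phitr btr xb + inner (Phitr^T *m a) h <= Ltr Phitr btr z.
  rewrite eL lerDl; apply: mulr_ge0; [by rewrite invr_ge0 | exact: sqnorm2_ge0].
have hP : norm1 (Psi *m xb) + inner (Psi^T *m v) h <= norm1 (Psi *m z).
  have := sv (Psi *m z); by rewrite -mulmxBr inner_tr.
have hT : TV D xb + inner (\sum_(i < n) (D i)^T *m w i) h <= TV D z.
  rewrite /TV inner_suml -big_split /=; apply: ler_sum => i _.
  have := sw i (D i *m z); by rewrite -mulmxBr inner_tr.
have e0 : inner (Phitr^T *m a) h + xi.1 * inner (Psi^T *m v) h
        + xi.2 * inner (\sum_(i < n) (D i)^T *m w i) h = 0.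
  by rewrite -!innerZl -!innerDl eq0 inner0l.
have t1 := ler_wpM2l xi1 hP. have t2 := ler_wpM2l xi2 hT.
rewrite !mulrDr in t1 t2.
lra.
Qed.

Lemma Sc_of_Sp lam x : nonneg2 lam -> Sp Psi D Phitr btr lam x ->
  Sc Psi D Phitr btr (Qmap Psi D x) x.
Proof.
case=> l1 l2 H; split => //= z h1 h2.
have := H z.
have := ler_wpM2l l1 h1. have := ler_wpM2l l2 h2. lra.
Qed.

End Aux.
Theorem mainTheorem4 (R : realType) (n d m1 m2 : nat) (p : 'I_n -> nat)
  (Psi : 'M[R]_(d, n)) (D : forall i : 'I_n, 'M[R]_(p i, n))
  (Phitr : 'M[R]_(m1, n)) (btr : 'cV[R]_m1)
  (Phival : 'M[R]_(m2, n)) (bval : 'cV[R]_m2)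
  (xb : 'cV[R]_n) (rb xib : R * R) :
  rb = Qmap Psi D xb ->
  localP2 Psi D Phitr btr Phival bval xb rb ->
  Mset Psi D Phitr btr rb xb xib ->
  localP1 Psi D Phitr btr Phival bval xb xib.
Proof.
move=> erb [_ [eps eps0 Hloc]] HM.
have xinn : nonneg2 xib by case: HM.
split; first by split => //; exact: Sp_of_M HM.
set K1 := Kmx Psi. set K2 := \sum_(i < n) Kmx (D i).
have K10 : 0 <= K1 by exact: Kmx_ge0.
have K20 : 0 <= K2 by apply: sumr_ge0 => i _; exact: Kmx_ge0.
have c0 : 0 < 1 + K1 + K2 by lra.
exists (eps / (1 + K1 + K2)); first by rewrite divr_gt0.
move=> x lam [lam0 Hsp] hd.
apply: (Hloc x (Qmap Psi D x)); first by split; [split => /=; [exact: norm1_ge0 | apply: sumr_ge0 => i _; exact: norm1_ge0] | exact: (Sc_of_Sp lam0 Hsp)].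
set s := Num.sqrt (sqnorm2 (x - xb)).
have s0 : 0 <= s by exact: sqrtr_ge0.
have ss : s ^+ 2 = sqnorm2 (x - xb) by rewrite sqr_sqrtr // sqnorm2_ge0.
have sd : s <= dist x lam xb xib.
  rewrite /s /dist ler_sqrt; last by rewrite -addrA addr_ge0 ?sqnorm2_ge0 // addr_ge0 // sqr_ge0.
  by rewrite -addrA lerDl addr_ge0 // sqr_ge0.
have slt : s * (1 + K1 + K2) < eps.
  by rewrite -ltr_pdivlMr //; exact: le_lt_trans hd.
have d1 : `|norm1 (Psi *m x) - norm1 (Psi *m xb)| <= K1 * s by exact: norm1_lip.
have d2 : `|TV D x - TV D xb| <= K2 * s.
  rewrite /TV -sumrB mulr_suml; apply: (le_trans (ler_norm_sum _ _ _)).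
  by apply: ler_sum => i _; exact: norm1_lip.
rewrite erb /dist /=.
set a1 := norm1 (Psi *m x) - norm1 (Psi *m xb) in d1 *.
set a2 := TV D x - TV D xb in d2 *.
have e1 : a1 ^+ 2 = `|a1| ^+ 2 by rewrite real_normK // num_real.
have e2 : a2 ^+ 2 = `|a2| ^+ 2 by rewrite real_normK // num_real.
have n1 := normr_ge0 a1. have n2 := normr_ge0 a2.
rewrite -ss e1 e2.
have -> : eps = Num.sqrt (eps ^+ 2) by rewrite sqrtr_sqr ger0_norm // ltW.
rewrite ltr_sqrt; last by rewrite exprn_gt0.
set T := s * (1 + K1 + K2).
have T0 : 0 <= T by rewrite mulr_ge0 // ltW.
have h1 : s ^+ 2 + `|a1| ^+ 2 + `|a2| ^+ 2 <= T ^+ 2.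
  rewrite /T; nra.
have h2 : T ^+ 2 < eps ^+ 2.
  by rewrite -subr_gt0 subr_sqr mulr_gt0 //; rewrite /T; lra.
lra.
Qed.
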